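(* Let $\bar u=(u_\beta)_{\beta<\alpha}$ be a densely non-increasing sequence of elements of a linear order $(U,<)$. If $\bar u$ is not non-increasing, then there exists a greatest ordinal $\alpha'<\alpha$ such that $(u_\beta)_{\beta<\alpha'}$ is non-increasing; moreover $\alpha'$ is a limit ordinal and $\bar u$ is not ultimately constant in $\alpha'$.
   Context: A sequence $(u_\beta)_{\beta<\alpha}$ indexed by a countable ordinal is non-increasing if $\beta<\beta'<\alpha$ implies $u_\beta\ge u_{\beta'}$. It is constant on $[\gamma,\gamma')$ if $u_\beta=u_\gamma$ for all $\gamma\le\beta<\gamma'$. It is densely non-increasing if for all $\gamma<\gamma'\le\alpha$, either it is constant on $[\gamma,\gamma')$ or there exist $\gamma\le\beta<\beta'<\gamma'$ with $u_\beta>u_{\beta'}$. For a limit ordinal $\gamma\le\alpha$, the sequence is ultimately constant in $\gamma$ if there is $\gamma'<\gamma$ such that it is constant on $[\gamma',\gamma)$. *)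

(* Defs.v *)
From HB Require Import structures.
From mathcomp Require Import all_boot all_order.
Set Implicit Arguments. Unset Strict Implicit. Unset Printing Implicit Defensive.
Import Order.TTheory.
Local Open Scope order_scope.

(* A countable ordinal alpha is represented by (the order type of) a countable
   well-ordered type T with strict order lt: elements of T are the ordinals
   beta < alpha.  Positions gamma <= alpha are elements of [option T], where
   [None] stands for alpha itself and [Some b] for the ordinal b < alpha. *)

Definition countable_wellorder (T : Type) (lt : T -> T -> Prop) : Prop :=
  [/\ (forall x, ~ lt x x),
      (forall x y z, lt x y -> lt y z -> lt x z),
      (forall x y, lt x y \/ x = y \/ lt y x),
      well_founded lt &
      exists f : T -> nat, injective f].

Section OrdSeq.
Variables (T : Type) (lt : T -> T -> Prop).
Variables (d : Order.disp_t) (U : orderType d) (u : T -> U).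

Definition leT (x y : T) : Prop := lt x y \/ x = y.

Definition below (x : T) (g : option T) : Prop :=
  match g with None => True | Some a => lt x a end.

Definition nonincr_below (g : option T) : Prop :=
  forall x y, lt x y -> below y g -> (u y <= u x).

Definition nonincreasing : Prop := nonincr_below None.

Definition constant_on (g : T) (g' : option T) : Prop :=
  forall x, leT g x -> below x g' -> u x = u g.

Definition densely_nonincreasing : Prop :=
  forall (g : T) (g' : option T), below g g' ->
    constant_on g g' \/
    exists b b', [/\ leT g b, lt b b', below b' g' & u b' < u b].

Definition is_limit (a : T) : Prop :=
  (exists x, lt x a) /\ (forall x, lt x a -> exists y, lt x y /\ lt y a).

Definition ultimately_constant_in (a : T) : Prop :=
  exists g, lt g a /\ constant_on g (Some a).

End OrdSeq.

(* Main.v *)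
Require Import Defs.
From HB Require Import structures.
From mathcomp Require Import all_boot all_order.
From Stdlib Require Import Classical.
Import Order.TTheory.
Local Open Scope order_scope.

Lemma wf_min (T : Type) (lt : T -> T -> Prop) : well_founded lt ->
  forall P : T -> Prop, (exists x, P x) ->
  exists x, P x /\ forall y, P y -> ~ lt y x.
Proof.
move=> wf P [x0 Px0]; apply: NNPP => H.
suff: forall x, Acc lt x -> ~ P x by move/(_ x0 (wf x0)).
move=> x; elim=> {}x _ IH Px; apply: H; exists x; split=> // y Py lyx.
exact: (IH y lyx Py).
Qed.

Theorem mainTheorem12 (T : Type) (lt : T -> T -> Prop)
  (d : Order.disp_t) (U : orderType d) (u : T -> U) :
  countable_wellorder lt ->
  densely_nonincreasing lt u ->
  ~ nonincreasing lt u ->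
  exists a : T,
    [/\ nonincr_below lt u (Some a),
        (forall b : T, nonincr_below lt u (Some b) -> leT lt b a),
        is_limit lt a &
        ~ ultimately_constant_in lt u a].
Proof.
move=> [irr tr tri wf _] dn ni.
have [a [[x0 [lx0a ux0a]] amin]] :
    exists a, (exists x, lt x a /\ u x < u a) /\
      forall y, (exists x, lt x y /\ u x < u y) -> ~ lt y a.
  apply: (@wf_min _ _ wf) ; apply: NNPP => H; apply: ni => x y lxy _.
  rewrite leNgt; apply/negP => h; apply: H; by exists y, x.
have good : nonincr_below lt u (Some a).
  move=> x y lxy /= lya; rewrite leNgt; apply/negP => h.
  by apply: (amin y) => //; exists x.
have [g' [ag' g'le]] : exists g' : option T, below lt a g' /\
    forall b, below lt b g' -> leT lt b a.
  case: (classic (exists z, lt a z)) => [ex|nex].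
    have [z [az zmin]] := @wf_min _ _ wf _ ex.
    exists (Some z); split=> // b /= lbz.
    case: (tri b a) => [h|[h|h]]; [by left|by right|].
    by case: (zmin b h).
  exists None; split=> // b _.
  case: (tri b a) => [h|[h|h]]; [by left|by right|].
  by case: nex; exists b.
have nuc : ~ ultimately_constant_in lt u a.
  move=> [g [lga cg]].
  have ugx0 : u g <= u x0.
    case: (tri g x0) => [h|[h|h]].
    - by rewrite (cg x0 (or_introl h) lx0a).
    - by rewrite h.
    - exact: good.
  have uga : u g < u a by apply: le_lt_trans ugx0 ux0a.
  have bg : below lt g g'.
    by case: (g') ag' => [z|] //= az; apply: tr lga az.
  case: (dn g g' bg).
  - move=> cst; have := cst a (or_introl lga) ag'.
    by move=> e; move: uga; rewrite e ltxx.
  - move=> [b [b' [gb bb' b'g' ub]]].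
    have bga : lt b a.
      case: (g'le b' b'g') => [h|<-] //; by apply: tr bb' h.
    case: (g'le b' b'g') => [h|e].
    + have gb' : leT lt g b'.
        by left; case: gb => [h'|e]; [apply: tr h' bb'|rewrite e].
      by rewrite (cg b gb bga) (cg b' gb' h) ltxx in ub.
    + rewrite e (cg b gb bga) in ub.
      by have := lt_trans ub uga; rewrite ltxx.
exists a; split=> //.
- move=> b gb; case: (tri b a) => [h|[h|h]]; [by left|by right|].
  have := gb x0 a lx0a h; rewrite leNgt ux0a //.
- split; first by exists x0.
  move=> x lxa; apply: NNPP => H; apply: nuc; exists x; split=> //.
  move=> y [lxy|<-] lya //.
  by case: H; exists y.
Qed.
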